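(* Let $M\in\mathbf{F}_q[t]$ have degree $d\ge1$, $\chi$ a non-trivial Dirichlet character mod $M$ and $k\ge2$. Then for $n\ge2$, $$\sum_{n_1+n_2=n}Z_{k-1}(n_1,\chi)Z_1(n_2,\chi)=\frac{(-1)^kk}{(k-1)!}\Bigg\{\sum_{j=1}^{d_\chi}m_j(\chi)^k\frac{\alpha_j(\chi)^n(\log n)^{k-1}}n+O\Big(d^k\Big(k+\frac1{\gamma(\chi)}\Big)\frac{q^{n/2}(\log n)^{k-2}}n\Big)\Bigg\},$$ with an absolute implied constant.
   Context: For $\chi\ne\chi_0$ mod $M$, $\mathcal{L}(u,\chi)$ (with $\mathcal{L}(q^{-s},\chi)=\sum_{a\text{ monic}}\chi(a)q^{-s\deg a}$) is a polynomial of degree $\le d-1$; let $\alpha_j(\chi)=\sqrt qe^{i\gamma_j(\chi)}$, $\gamma_j(\chi)\in(-\pi,\pi)\setminus\{0\}$, $1\le j\le d_\chi$, be its distinct non-real inverse zeros of absolute value $\sqrt q$, with multiplicities $m_j(\chi)$. $\gamma(\chi)=\min_{1\le i\ne j\le d_\chi}\{|\gamma_i(\chi)-\gamma_j(\chi)|,|\gamma_i(\chi)|,|\pi-\gamma_i(\chi)|\}$. For $\ell\ge1$, $Z_\ell(n,\chi)=\frac{(-1)^\ell}{(\ell-1)!}\sum_{j=1}^{d_\chi}m_j(\chi)^\ell\frac{\alpha_j(\chi)^n(\log n)^{\ell-1}}n$. *)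

(* Defs.v *)
From HB Require Import structures.
From mathcomp Require Import all_boot all_order all_algebra.
From Stdlib Require Import Reals List Factorial.
Set Implicit Arguments. Unset Strict Implicit. Unset Printing Implicit Defensive.

Open Scope R_scope.

Definition Cx : Type := (R * R)%type.
Definition C0 : Cx := (0, 0).
Definition C1 : Cx := (1, 0).
Definition Cadd (a b : Cx) : Cx := (fst a + fst b, snd a + snd b).
Definition Copp (a : Cx) : Cx := (- fst a, - snd a).
Definition Csub (a b : Cx) : Cx := Cadd a (Copp b).
Definition Cmul (a b : Cx) : Cx :=
  (fst a * fst b - snd a * snd b, fst a * snd b + snd a * fst b).
Fixpoint Cpow (a : Cx) (n : nat) : Cx :=
  match n with O => C1 | S m => Cmul a (Cpow a m) end.
Definition Cscale (r : R) (a : Cx) : Cx := (r * fst a, r * snd a).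
Definition Cnorm (a : Cx) : R := sqrt (fst a * fst a + snd a * snd a).

Fixpoint peval (Q : list Cx) (u : Cx) : Cx :=
  match Q with nil => C0 | c :: Q' => Cadd c (Cmul u (peval Q' u)) end.

Section Chars.
Variable F : finFieldType.

Definition is_dirichlet_char (M : {poly F}) (chi : {poly F} -> Cx) : Prop :=
  (forall a b : {poly F}, chi (GRing.mul a b) = Cmul (chi a) (chi b)) /\
  (forall a b : {poly F}, modp a M = modp b M -> chi a = chi b) /\
  (forall a : {poly F}, chi a <> C0 <-> coprimep a M).

Definition nontrivial_char (M : {poly F}) (chi : {poly F} -> Cx) : Prop :=
  exists a : {poly F}, coprimep a M /\ chi a <> C1.

Local Open Scope ring_scope.
Definition monic_of (m : nat) (f : {ffun 'I_m -> F}) : {poly F} :=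
  'X^m + \sum_(i < m) (f i)%:P * 'X^i.
Local Close Scope ring_scope.

(* coefficient of u^m in L(u,chi): sum of chi(a) over monic a of degree m *)
Definition Lcoef (chi : {poly F} -> Cx) (m : nat) : Cx :=
  \big[Cadd/C0]_(f : {ffun 'I_m -> F}) chi (monic_of f).

(* L(u,chi) = sum_{m <= d-1} Lcoef chi m u^m  (for chi non-trivial mod M of
   degree d, Lcoef chi m = 0 for m >= d, so this is the whole series) *)
Definition Lpoly (chi : {poly F} -> Cx) (d : nat) (u : Cx) : Cx :=
  \big[Cadd/C0]_(m < d) Cmul (Lcoef chi m) (Cpow u m).

End Chars.

Definition is_inv_zero (P : Cx -> Cx) (alpha : Cx) : Prop :=
  exists u : Cx, Cmul alpha u = C1 /\ P u = C0.

Definition inv_zero_mult (P : Cx -> Cx) (alpha : Cx) (m : nat) : Prop :=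
  exists Q : list Cx,
    (forall u : Cx, P u = Cmul (Cpow (Csub C1 (Cmul alpha u)) m) (peval Q u)) /\
    (forall u : Cx, Cmul alpha u = C1 -> peval Q u <> C0).

Definition alpha_of (q : R) (g : R) : Cx := (sqrt q * cos g, sqrt q * sin g).

(* zs : list of pairs (gamma_j, m_j) enumerating the distinct non-real inverse
   zeros of P of absolute value sqrt q, with their multiplicities *)
Definition zero_data (P : Cx -> Cx) (q : R) (zs : list (R * nat)) : Prop :=
  NoDup (map fst zs) /\
  (forall g m, In (g, m) zs ->
      - PI < g < PI /\ g <> 0 /\
      is_inv_zero P (alpha_of q g) /\ inv_zero_mult P (alpha_of q g) m) /\
  (forall a : Cx, is_inv_zero P a -> Cnorm a = sqrt q -> snd a <> 0 ->
      exists g m, In (g, m) zs /\ a = alpha_of q g).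

(* gamma(chi) = min over i<>j of |g_i-g_j|, and over i of |g_i|, |pi-g_i|
   (literal reading of the paper); convention gamma = PI if d_chi = 0. *)
Definition gamma_vals (gs : list R) : list R :=
  flat_map (fun x => Rabs x :: Rabs (PI - x) ::
     flat_map (fun y => if Req_EM_T x y then nil else (Rabs (x - y) :: nil)) gs) gs.

Definition gamma_min (zs : list (R * nat)) : R :=
  match gamma_vals (map fst zs) with
  | nil => PI
  | v :: vs => fold_right Rmin v vs
  end.

Definition Zsum (q : R) (zs : list (R * nat)) (l n : nat) : Cx :=
  Cscale ((-1) ^ l / INR (fact (l - 1)))
    (fold_right Cadd C0
       (map (fun p => Cscale (INR (snd p) ^ l * ln (INR n) ^ (l - 1) / INR n)
                             (Cpow (alpha_of q (fst p)) n)) zs)).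

(* Main.v *)
From Pilot Require Import Defs.
From HB Require Import structures.
From mathcomp Require Import all_boot all_order all_algebra.
From Stdlib Require Import Reals List Factorial.
Open Scope R_scope.
From Stdlib Require Import Lra Lia.
From mathcomp Require Import zify.
From Coquelicot Require Complex.
From Stdlib Require Import Classical.
Import Pilot.Defs.

Ltac ceq := unfold Csub, Cadd, Copp, Cmul, Cscale, C0, C1;
  apply injective_projections; simpl; ring.

Definition csum {A} (l : list A) (F : A -> Cx) := fold_right Cadd C0 (map F l).
Definition rsum {A} (l : list A) (F : A -> R) := fold_right Rplus 0 (map F l).

Lemma csum_nil {A} (F : A -> Cx) : csum nil F = C0. Proof. reflexivity. Qed.
Lemma csum_cons {A} (a : A) l F : csum (a :: l) F = Cadd (F a) (csum l F).
Proof. reflexivity. Qed.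
Lemma rsum_nil {A} (F : A -> R) : rsum nil F = 0. Proof. reflexivity. Qed.
Lemma rsum_cons {A} (a : A) l F : rsum (a :: l) F = F a + rsum l F.
Proof. reflexivity. Qed.

Lemma csum_ext_in {A} (l : list A) F G :
  (forall x, In x l -> F x = G x) -> csum l F = csum l G.
Proof.
  induction l as [|a l IH]; intros H; [reflexivity|].
  rewrite !csum_cons H; [|now left]. rewrite IH; [reflexivity|].
  intros; apply H; now right.
Qed.

Lemma rsum_le_in {A} (l : list A) F G :
  (forall x, In x l -> F x <= G x) -> rsum l F <= rsum l G.
Proof.
  induction l as [|a l IH]; intros H; [rewrite !rsum_nil; lra|].
  rewrite !rsum_cons. apply Rplus_le_compat; [apply H; now left|].
  apply IH; intros; apply H; now right.
Qed.

Lemma rsum_ext_in {A} (l : list A) F G :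
  (forall x, In x l -> F x = G x) -> rsum l F = rsum l G.
Proof.
  induction l as [|a l IH]; intros H; [reflexivity|].
  rewrite !rsum_cons H; [|now left]. rewrite IH; [reflexivity|].
  intros; apply H; now right.
Qed.

Lemma rsum_zero {A} (l : list A) : rsum l (fun _ => 0) = 0.
Proof. induction l; [reflexivity|]. rewrite rsum_cons IHl. ring. Qed.

Lemma rsum_ge0 {A} (l : list A) F : (forall x, In x l -> 0 <= F x) -> 0 <= rsum l F.
Proof.
  intros H. rewrite <- (rsum_zero l). apply rsum_le_in. exact H.
Qed.

Lemma rsum_scale {A} (l : list A) c F : rsum l (fun x => c * F x) = c * rsum l F.
Proof. induction l; [unfold rsum; simpl; ring|]. rewrite !rsum_cons IHl. ring. Qed.

Lemma rsum_add {A} (l : list A) F G : rsum l (fun x => F x + G x) = rsum l F + rsum l G.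
Proof. induction l; [unfold rsum; simpl; ring|]. rewrite !rsum_cons IHl. ring. Qed.

Lemma rsum_sub {A} (l : list A) F G : rsum l (fun x => F x - G x) = rsum l F - rsum l G.
Proof. induction l; [unfold rsum; simpl; ring|]. rewrite !rsum_cons IHl. ring. Qed.

Lemma csum_scale {A} (l : list A) c F : csum l (fun x => Cscale c (F x)) = Cscale c (csum l F).
Proof. induction l; [ceq|]. rewrite !csum_cons IHl. ceq. Qed.

Lemma csum_add {A} (l : list A) F G : csum l (fun x => Cadd (F x) (G x)) = Cadd (csum l F) (csum l G).
Proof. induction l; [ceq|]. rewrite !csum_cons IHl. ceq. Qed.

Lemma csum_sub {A} (l : list A) F G : csum l (fun x => Csub (F x) (G x)) = Csub (csum l F) (csum l G).
Proof. induction l; [ceq|]. rewrite !csum_cons IHl. ceq. Qed.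

Lemma csum_mull {A} (l : list A) a F : Cmul a (csum l F) = csum l (fun x => Cmul a (F x)).
Proof. induction l; [ceq|]. rewrite !csum_cons -IHl. ceq. Qed.

Lemma csum_mulr {A} (l : list A) a F : Cmul (csum l F) a = csum l (fun x => Cmul (F x) a).
Proof. induction l; [ceq|]. rewrite !csum_cons -IHl. ceq. Qed.

Lemma csum_swap {A B} (l1 : list A) (l2 : list B) F :
  csum l1 (fun x => csum l2 (fun y => F x y)) = csum l2 (fun y => csum l1 (fun x => F x y)).
Proof.
  induction l1 as [|a l1 IH].
  - simpl. induction l2; [reflexivity|]. rewrite csum_cons -IHl2. ceq.
  - rewrite csum_cons IH. rewrite -csum_add. apply csum_ext_in. intros; reflexivity.
Qed.

Lemma Cnorm_Cmod (a : Cx) : Cnorm a = Complex.Cmod a.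
Proof. unfold Cnorm, Complex.Cmod. f_equal. ring. Qed.

Lemma Cnorm_ge0 a : 0 <= Cnorm a.
Proof. rewrite Cnorm_Cmod. apply Complex.Cmod_ge_0. Qed.

Lemma Cnorm_tri a b : Cnorm (Cadd a b) <= Cnorm a + Cnorm b.
Proof. rewrite !Cnorm_Cmod. exact (Complex.Cmod_triangle a b). Qed.

Lemma Cnorm_mul a b : Cnorm (Cmul a b) = Cnorm a * Cnorm b.
Proof. rewrite !Cnorm_Cmod. exact (Complex.Cmod_mult a b). Qed.

Lemma Cnorm_scale r a : Cnorm (Cscale r a) = Rabs r * Cnorm a.
Proof.
  unfold Cnorm, Cscale; simpl.
  replace (r * fst a * (r * fst a) + r * snd a * (r * snd a)) with
    ((r * r) * (fst a * fst a + snd a * snd a)) by ring.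
  rewrite sqrt_mult_alt; [|nra]. f_equal. apply sqrt_Rsqr_abs.
Qed.

Lemma Cnorm_opp a : Cnorm (Copp a) = Cnorm a.
Proof. unfold Cnorm, Copp; simpl. f_equal; ring. Qed.

Lemma Cnorm_C0 : Cnorm C0 = 0.
Proof. unfold Cnorm, C0; simpl. rewrite Rmult_0_l Rplus_0_l. apply sqrt_0. Qed.

Lemma Cnorm_tri_sub a b : Cnorm (Csub a b) <= Cnorm a + Cnorm b.
Proof. unfold Csub. eapply Rle_trans; [apply Cnorm_tri|]. rewrite Cnorm_opp; lra. Qed.

Lemma Cnorm_csum {A} (l : list A) F : Cnorm (csum l F) <= rsum l (fun x => Cnorm (F x)).
Proof.
  induction l; [rewrite csum_nil Cnorm_C0 rsum_nil; lra|].
  rewrite csum_cons rsum_cons. eapply Rle_trans; [apply Cnorm_tri|]. lra.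
Qed.

Lemma Cnorm_pair (a b : R) : Cnorm (a, b) = sqrt (a * a + b * b).
Proof. reflexivity. Qed.


Lemma rsum_app {A} (l1 l2 : list A) F : rsum (l1 ++ l2) F = rsum l1 F + rsum l2 F.
Proof. induction l1; [rewrite rsum_nil; simpl; ring|]. simpl. rewrite !rsum_cons IHl1. ring. Qed.

Lemma telescope_le (a k : nat) (u F : nat -> R) :
  (forall m, In m (List.seq a k) -> u m <= F (S m) - F m) ->
  rsum (List.seq a k) u <= F (a + k)%nat - F a.
Proof.
  revert a; induction k as [|k IH]; intros a H.
  - rewrite addn0 rsum_nil; lra.
  - simpl List.seq. rewrite rsum_cons.
    have h1 := H a (or_introl (Logic.eq_refl _)).
    have h2 := IH (S a) (fun m hm => H m (or_intror hm)).
    replace (a + S k)%nat with (S a + k)%nat by lia. lra.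
Qed.

Lemma telescope_ge (a k : nat) (u F : nat -> R) :
  (forall m, In m (List.seq a k) -> F (S m) - F m <= u m) ->
  F (a + k)%nat - F a <= rsum (List.seq a k) u.
Proof.
  revert a; induction k as [|k IH]; intros a H.
  - rewrite addn0 rsum_nil; lra.
  - simpl List.seq. rewrite rsum_cons.
    have h1 := H a (or_introl (Logic.eq_refl _)).
    have h2 := IH (S a) (fun m hm => H m (or_intror hm)).
    replace (a + S k)%nat with (S a + k)%nat by lia. lra.
Qed.

Lemma pow_diff_up a b r : 0 <= b <= a -> a^(S r) - b^(S r) <= INR (S r) * a^r * (a - b).
Proof.
  intros [hb hab]. induction r as [|r IH].
  - simpl. lra.
  - have ha : 0 <= a by lra.
    have hbr : b ^ S r <= a ^ S r by (apply pow_incr; lra).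
    have hbr0 : 0 <= b ^ S r by (apply pow_le; lra).
    replace (a ^ S (S r) - b ^ S (S r)) with (a * (a ^ S r - b ^ S r) + b ^ S r * (a - b))
      by (simpl; ring).
    rewrite S_INR.
    replace ((INR (S r) + 1) * a ^ S r * (a - b)) with
      (a * (INR (S r) * a ^ r * (a - b)) + a ^ S r * (a - b)) by (simpl; ring).
    apply Rplus_le_compat.
    + apply Rmult_le_compat_l; lra.
    + apply Rmult_le_compat_r; lra.
Qed.

Lemma pow_diff_lo a b r : 0 <= b <= a -> INR (S r) * b^r * (a - b) <= a^(S r) - b^(S r).
Proof.
  intros [hb hab]. induction r as [|r IH].
  - simpl. lra.
  - have hbr0 : 0 <= b ^ S r by (apply pow_le; lra).
    replace (a ^ S (S r) - b ^ S (S r)) with (a * (a ^ S r - b ^ S r) + b ^ S r * (a - b))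
      by (simpl; ring).
    rewrite S_INR.
    replace ((INR (S r) + 1) * b ^ S r * (a - b)) with
      (b * (INR (S r) * b ^ r * (a - b)) + b ^ S r * (a - b)) by (simpl; ring).
    apply Rplus_le_compat; [|lra].
    have h0 : 0 <= INR (S r) * b ^ r * (a - b).
    { apply Rmult_le_pos; [apply Rmult_le_pos; [apply pos_INR| apply pow_le; lra]|lra]. }
    apply Rle_trans with (a * (INR (S r) * b ^ r * (a - b))).
    + apply Rmult_le_compat_r; lra.
    + apply Rmult_le_compat_l; lra.
Qed.

Lemma ln_le_sub1 x : 0 < x -> ln x <= x - 1.
Proof.
  intros hx. have h := exp_ineq1_le (ln x). rewrite exp_ln in h; lra.
Qed.

Lemma ln_mono x y : 0 < x -> x <= y -> ln x <= ln y.
Proof.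
  intros hx hxy. destruct (Rle_lt_or_eq_dec _ _ hxy) as [h|h].
  - left; apply ln_increasing; lra.
  - rewrite h; lra.
Qed.

Lemma ln_ge0 x : 1 <= x -> 0 <= ln x.
Proof. intros h. rewrite <- ln_1. apply ln_mono; lra. Qed.

Lemma ln_div x y : 0 < x -> 0 < y -> ln (x / y) = ln x - ln y.
Proof.
  intros hx hy. unfold Rdiv. rewrite ln_mult; [|lra|apply Rinv_0_lt_compat; lra].
  rewrite ln_Rinv; lra.
Qed.

Lemma ln_succ_up m : 0 < m -> ln (m + 1) - ln m <= / m.
Proof.
  intros hm. rewrite <- ln_div; [|lra|lra].
  eapply Rle_trans; [apply ln_le_sub1; apply Rdiv_lt_0_compat; lra|].
  right. field. lra.
Qed.

Lemma ln_succ_lo m : 0 < m -> / (m + 1) <= ln (m + 1) - ln m.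
Proof.
  intros hm. have h : ln (m / (m + 1)) <= m / (m + 1) - 1.
  { apply ln_le_sub1; apply Rdiv_lt_0_compat; lra. }
  rewrite ln_div in h; [|lra|lra].
  replace (m / (m + 1) - 1) with (- / (m + 1)) in h by (field; lra). lra.
Qed.

Lemma ln2_ge_half : / 2 <= ln 2.
Proof. left; exact ln_lt_2. Qed.

Lemma INR_pos_of m : (1 <= m)%nat -> 1 <= INR m.
Proof. intros h. change 1 with (INR 1). apply le_INR. apply/leP. exact h. Qed.


Lemma in_seq_b m a k : In m (List.seq a k) -> (a <= m)%nat /\ (m < a + k)%nat.
Proof. intros h. apply in_seq in h. lia. Qed.

Lemma INR_le_n m n : (m <= n)%nat -> INR m <= INR n.
Proof. intros h. apply le_INR. apply/leP. exact h. Qed.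

Lemma INR_S' m : INR m.+1 = INR m + 1.
Proof. apply S_INR. Qed.

Lemma lnpow_bounds n m p : (1 <= m)%nat -> (m <= n)%nat ->
  0 <= ln (INR m) ^ p <= ln (INR n) ^ p.
Proof.
  intros h1 h2. have hm := INR_pos_of _ h1. have hmn := INR_le_n _ _ h2.
  have h0 : 0 <= ln (INR m) by apply ln_ge0.
  split; [apply pow_le; exact h0|]. apply pow_incr. split; [exact h0|]. apply ln_mono; lra.
Qed.

Lemma pow0_ge0 p : 0 <= 0 ^ p.
Proof. destruct p; simpl; lra. Qed.

Section Fixed.
Variables (n p : nat).
Hypothesis hn : (2 <= n)%nat.
Let L := ln (INR n).

Lemma L_ge : / 2 <= L.
Proof.
  unfold L. eapply Rle_trans; [apply ln2_ge_half|]. apply ln_mono; [lra|].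
  change 2 with (INR 2). apply INR_le_n. exact hn.
Qed.

Lemma n_ge2 : 2 <= INR n.
Proof. change 2 with (INR 2). apply INR_le_n. exact hn. Qed.

Lemma Lp_ge0 : 0 <= L ^ p.
Proof. apply pow_le. have := L_ge. lra. Qed.

Lemma T1_bound :
  Rabs (INR (S p) * rsum (List.seq 1 (n-1)) (fun m => ln (INR m) ^ p / INR m) - L ^ (S p))
  <= INR (S p) * L ^ p.
Proof.
  rewrite <- rsum_scale.
  have hn1 : (1 + (n - 1))%nat = n by lia.
  have hc : 1 <= INR (S p) by (apply INR_pos_of; lia).
  have hLp := Lp_ge0.
  apply Rabs_le; split.
  -
    have H := telescope_ge 1 (n-1) (fun m => INR (S p) * (ln (INR m) ^ p / INR m))
       (fun m => ln (INR m) ^ S p - INR (S p) * ln (INR m) ^ p).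
    rewrite hn1 in H. change (INR 1) with 1 in H. rewrite ln_1 in H.
    fold L in H.
    have h0 := pow0_ge0 p.
    enough (L ^ S p - INR (S p) * L ^ p <= rsum (List.seq 1 (n - 1))
      (fun m : nat => INR (S p) * (ln (INR m) ^ p / INR m))) by nra.
    eapply Rle_trans; [|apply H].
    { simpl (0 ^ S p). nra. }
    intros m hm. apply in_seq_b in hm. destruct hm as [h1 h2].
    have hm1 := INR_pos_of _ h1. rewrite (INR_S' m).
    set x := ln (INR m). set y := ln (INR m + 1).
    have hx : 0 <= x by (apply ln_ge0; lra).
    have hxy : x <= y by (apply ln_mono; lra).
    have hyx : y - x <= / INR m by (apply ln_succ_up; lra).
    have hd := pow_diff_up y x p (conj hx hxy).
    have hpp : x ^ p <= y ^ p by (apply pow_incr; lra).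
    have hx0 : 0 <= x ^ p by (apply pow_le; lra).
    have hi : 0 < / INR m <= 1.
    { split; [apply Rinv_0_lt_compat; lra|]. rewrite <- Rinv_1. apply Rinv_le_contravar; lra. }
    have hy0 : 0 <= y ^ p by (apply pow_le; lra).
    have e1 : INR (S p) * y ^ p * (y - x) <= INR (S p) * y ^ p * / INR m.
    { apply Rmult_le_compat_l; [nra|lra]. }
    have e2 : INR (S p) * (y ^ p - x ^ p) * / INR m <= INR (S p) * (y ^ p - x ^ p).
    { have : 0 <= INR (S p) * (y ^ p - x ^ p) by nra. nra. }
    unfold Rdiv. nra.
  -
    have H := telescope_le 1 (n-1) (fun m => INR (S p) * (ln (INR m) ^ p / INR m))
       (fun m => ln (INR m) ^ S p - INR (S p) * L ^ p * / INR m).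
    rewrite hn1 in H. change (INR 1) with 1 in H. rewrite ln_1 in H. fold L in H.
    have hn2 := n_ge2.
    enough (rsum (List.seq 1 (n - 1))
      (fun m : nat => INR (S p) * (ln (INR m) ^ p / INR m)) <= L ^ S p + INR (S p) * L ^ p) by lra.
    eapply Rle_trans; [apply H|].
    { intros m hm. apply in_seq_b in hm. destruct hm as [h1 h2].
      have hm1 := INR_pos_of _ h1. rewrite (INR_S' m).
      have hmn : (m <= n)%nat by lia.
      have hb := lnpow_bounds n m p h1 hmn. fold L in hb.
      set x := ln (INR m). set y := ln (INR m + 1).
      have hx : 0 <= x by (apply ln_ge0; lra).
      have hxy : x <= y by (apply ln_mono; lra).
      have hyx : / (INR m + 1) <= y - x by (apply ln_succ_lo; lra).
      have hd := pow_diff_lo y x p (conj hx hxy).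
      have hx0 : 0 <= x ^ p by (apply pow_le; lra).
      have hi : / (INR m + 1) <= / INR m by (apply Rinv_le_contravar; lra).
      have hi0 : 0 < / (INR m + 1) by (apply Rinv_0_lt_compat; lra).
      have e1 : INR (S p) * x ^ p * / (INR m + 1) <= INR (S p) * x ^ p * (y - x).
      { apply Rmult_le_compat_l; [nra|lra]. }
      have e2 : INR (S p) * x ^ p * (/ INR m - / (INR m + 1)) <=
                INR (S p) * L ^ p * (/ INR m - / (INR m + 1)).
      { apply Rmult_le_compat_r; [lra|]. apply Rmult_le_compat_l; [lra|]. exact (proj2 hb). }
      unfold Rdiv. lra. }
    have hin : 0 < / INR n by (apply Rinv_0_lt_compat; lra).
    have hh : 0 <= INR (S p) * L ^ p * / INR n.
    { apply Rmult_le_pos; [apply Rmult_le_pos; lra|lra]. }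
    simpl (0 ^ S p). rewrite Rinv_1. lra.
Qed.

Lemma INR_n_sub m : (m <= n - 1)%nat -> 1 <= INR n - INR m.
Proof.
  intros h. have h' : (m + 1 <= n)%nat by lia. apply INR_le_n in h'.
  rewrite plus_INR in h'. simpl in h'. lra.
Qed.

Lemma H2_lo : L <= rsum (List.seq 1 (n-1)) (fun m => / (INR n - INR m)).
Proof.
  have hn1 : (1 + (n - 1))%nat = n by lia.
  have H := telescope_ge 1 (n-1) (fun m => / (INR n - INR m))
     (fun m => - ln (INR n - INR m + 1)).
  rewrite hn1 in H. change (INR 1) with 1 in H.
  replace (INR n - INR n + 1) with 1 in H by ring. rewrite ln_1 in H.
  replace (INR n - 1 + 1) with (INR n) in H by ring. fold L in H.
  eapply Rle_trans; [|apply H]; [lra|].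
  intros m hm. apply in_seq_b in hm. destruct hm as [h1 h2].
  have hx : 1 <= INR n - INR m by (apply INR_n_sub; lia).
  rewrite (INR_S' m). replace (INR n - (INR m + 1) + 1) with (INR n - INR m) by ring.
  have := ln_succ_up (INR n - INR m) ltac:(lra). lra.
Qed.

Lemma sub_last : INR n - INR (1 + (n - 2)) = 1.
Proof.
  replace (1 + (n - 2))%nat with (n - 1)%nat by lia.
  rewrite minus_INR; [|lia]. change (INR 1) with 1. ring.
Qed.

Lemma H2_up : rsum (List.seq 1 (n-1)) (fun m => / (INR n - INR m)) <= 1 + L.
Proof.
  have e : (n - 1)%nat = S (n - 2) by lia. rewrite e seq_S rsum_app rsum_cons rsum_nil.
  have e2 : Nat.add 1 (n - 2) = (1 + (n - 2))%nat by reflexivity.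
  rewrite e2 sub_last Rinv_1.
  have hn1 : (1 + (n - 2))%nat = (n - 1)%nat by lia.
  have H := telescope_le 1 (n-2) (fun m => / (INR n - INR m))
     (fun m => - ln (INR n - INR m)).
  rewrite hn1 in H. change (INR 1) with 1 in H.
  have e3 : INR n - INR (n - 1) = 1.
  { rewrite <- hn1. exact sub_last. }
  rewrite e3 ln_1 in H.
  have hl : ln (INR n - 1) <= L by (unfold L; apply ln_mono; have := n_ge2; lra).
  enough (rsum (List.seq 1 (n - 2)) (fun m : nat => / (INR n - INR m)) <= L) by lra.
  eapply Rle_trans; [apply H|lra].
  intros m hm. apply in_seq_b in hm. destruct hm as [h1 h2].
  have hx : 1 <= INR n - INR (S m) by (apply INR_n_sub; lia).
  rewrite (INR_S' m) in hx |- *.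
  have := ln_succ_lo (INR n - (INR m + 1)) ltac:(lra).
  replace (INR n - (INR m + 1) + 1) with (INR n - INR m) by ring. lra.
Qed.

Lemma H1_up : rsum (List.seq 1 (n-1)) (fun m => / INR m) <= 1 + L.
Proof.
  have e : (n - 1)%nat = S (n - 2) by lia. rewrite e. simpl List.seq. rewrite rsum_cons.
  change (INR 1) with 1. rewrite Rinv_1.
  have hn1 : (2 + (n - 2))%nat = n by lia.
  have H := telescope_le 2 (n-2) (fun m => / INR m) (fun m => ln (INR m - 1)).
  rewrite hn1 in H. change (INR 2) with 2 in H. replace (2 - 1) with 1 in H by ring.
  rewrite ln_1 in H.
  have hl : ln (INR n - 1) <= L by (unfold L; apply ln_mono; have := n_ge2; lra).
  enough (rsum (List.seq 2 (n - 2)) (fun m : nat => / INR m) <= L) by lra.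
  eapply Rle_trans; [apply H|lra].
  intros m hm. apply in_seq_b in hm. destruct hm as [h1 h2].
  have hx : 2 <= INR m by (change 2 with (INR 2); apply INR_le_n; lia).
  rewrite (INR_S' m). replace (INR m + 1 - 1) with (INR m) by ring.
  have := ln_succ_lo (INR m - 1) ltac:(lra).
  replace (INR m - 1 + 1) with (INR m) by ring. lra.
Qed.

Lemma T2_bound :
  - (3 * INR p * L ^ p) <=
  rsum (List.seq 1 (n-1)) (fun m => ln (INR m) ^ p / (INR n - INR m)) - L ^ (S p)
  <= L ^ p.
Proof.
  have hLp := Lp_ge0. have hL := L_ge. have h2l := H2_lo. have h2u := H2_up.
  have h1u := H1_up.
  split.
  - destruct p as [|r].
    + simpl. replace (rsum (List.seq 1 (n - 1)) (fun m : nat => 1 / (INR n - INR m)))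
        with (rsum (List.seq 1 (n - 1)) (fun m : nat => / (INR n - INR m))).
      * lra.
      * apply rsum_ext_in. intros; unfold Rdiv; ring.
    + have hr : 0 <= L ^ r by (apply pow_le; lra).
      have hrr : L ^ r <= 2 * L ^ S r by (simpl; nra).
      have hS : 0 <= INR (S r) by apply pos_INR.
      have HH : rsum (List.seq 1 (n - 1)) (fun m => L ^ S r * / (INR n - INR m) - INR (S r) * L ^ r * / INR m)
          <= rsum (List.seq 1 (n - 1)) (fun m : nat => ln (INR m) ^ S r / (INR n - INR m)).
      { apply rsum_le_in. intros m hm. apply in_seq_b in hm. destruct hm as [h1 h2].
        have hm1 := INR_pos_of _ h1.
        have hD : 1 <= INR n - INR m by (apply INR_n_sub; lia).
        have hmn : (m <= n)%nat by lia.
        have hb := lnpow_bounds n m r h1 hmn.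
        have hx : 0 <= ln (INR m) by (apply ln_ge0; lra).
        have hxL : ln (INR m) <= L by (unfold L; apply ln_mono; lra).
        have hd := pow_diff_up L (ln (INR m)) r (conj hx hxL).
        have hlr : L - ln (INR m) <= (INR n - INR m) / INR m.
        { unfold L. rewrite <- ln_div; [|lra|lra].
          eapply Rle_trans; [apply ln_le_sub1; apply Rdiv_lt_0_compat; lra|].
          right; field; lra. }
        have hiD : 0 < / (INR n - INR m) by (apply Rinv_0_lt_compat; lra).
        have hk : INR (S r) * L ^ r * (L - ln (INR m)) <= INR (S r) * L ^ r * ((INR n - INR m) / INR m).
        { apply Rmult_le_compat_l; [nra|lra]. }
        have hk2 : (L ^ S r - ln (INR m) ^ S r) * / (INR n - INR m) <=
                   INR (S r) * L ^ r * ((INR n - INR m) / INR m) * / (INR n - INR m).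
        { apply Rmult_le_compat_r; lra. }
        replace (INR (S r) * L ^ r * ((INR n - INR m) / INR m) * / (INR n - INR m))
          with (INR (S r) * L ^ r * / INR m) in hk2 by (field; lra).
        unfold Rdiv. lra. }
      rewrite rsum_sub !rsum_scale in HH.
      have hp3 : INR (S r) * L ^ r * rsum (List.seq 1 (n - 1)) (fun m : nat => / INR m)
                 <= INR (S r) * L ^ r * (1 + L).
      { apply Rmult_le_compat_l; [nra|lra]. }
      have hp4 : L ^ S r * L <= L ^ S r * rsum (List.seq 1 (n - 1)) (fun m : nat => / (INR n - INR m)).
      { apply Rmult_le_compat_l; lra. }
      have e5 : L ^ S (S r) = L ^ S r * L by (simpl; ring).
      rewrite e5. 
      have : INR (S r) * L ^ r * (1 + L) <= 3 * INR (S r) * L ^ S r.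
      { have : INR (S r) * L ^ r <= INR (S r) * (2 * L ^ S r) by (apply Rmult_le_compat_l; lra).
        have : INR (S r) * L ^ r * L = INR (S r) * L ^ S r by (simpl; ring). nra. }
      lra.
  - have HH : rsum (List.seq 1 (n - 1)) (fun m : nat => ln (INR m) ^ p / (INR n - INR m))
              <= rsum (List.seq 1 (n - 1)) (fun m => L ^ p * / (INR n - INR m)).
    { apply rsum_le_in. intros m hm. apply in_seq_b in hm. destruct hm as [h1 h2].
      have hD : 1 <= INR n - INR m by (apply INR_n_sub; lia).
      have hmn : (m <= n)%nat by lia.
      have hb := lnpow_bounds n m p h1 hmn. fold L in hb.
      have hiD : 0 < / (INR n - INR m) by (apply Rinv_0_lt_compat; lra).
      unfold Rdiv. apply Rmult_le_compat_r; lra. }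
    rewrite rsum_scale in HH.
    have : L ^ p * rsum (List.seq 1 (n - 1)) (fun m : nat => / (INR n - INR m)) <= L ^ p * (1 + L).
    { apply Rmult_le_compat_l; lra. }
    have e5 : L ^ S p = L ^ p * L by (simpl; ring). lra.
Qed.

Definition fw (m : nat) := ln (INR m) ^ p / (INR m * (INR n - INR m)).

Lemma w_bound m : (1 <= m)%nat -> (m <= n - 1)%nat -> 0 < / (INR m * (INR n - INR m)) <= 2 / INR n.
Proof.
  intros h1 h2. have hm := INR_pos_of _ h1. have hD := INR_n_sub m h2.
  have hn2 := n_ge2.
  have hpos : 0 < INR m * (INR n - INR m) by nra.
  split; [apply Rinv_0_lt_compat; lra|].
  have hge : INR n / 2 <= INR m * (INR n - INR m) by nra.
  unfold Rdiv. rewrite <- (Rinv_inv 2). rewrite <- Rinv_mult.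
  apply Rinv_le_contravar; [lra|]. lra.
Qed.

Lemma fw_bound m : (1 <= m)%nat -> (m <= n - 1)%nat -> 0 <= fw m <= 2 * L ^ p / INR n.
Proof.
  intros h1 h2. have hw := w_bound m h1 h2.
  have hmn : (m <= n)%nat by lia.
  have hb := lnpow_bounds n m p h1 hmn. fold L in hb.
  unfold fw, Rdiv. split; [nra|].
  have : ln (INR m) ^ p * / (INR m * (INR n - INR m)) <= L ^ p * (2 / INR n).
  { apply Rmult_le_compat; lra. }
  unfold Rdiv in *. lra.
Qed.

Lemma fw_var : rsum (List.seq 1 (n-2)) (fun m => Rabs (fw (S m) - fw m)) <= 4 * L ^ p / INR n.
Proof.
  have hn2 := n_ge2. have hLp := Lp_ge0.
  have hin : 0 < / INR n by (apply Rinv_0_lt_compat; lra).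
  have hn1 : (1 + (n - 2))%nat = (n - 1)%nat by lia.
  have H := telescope_le 1 (n-2) (fun m => Rabs (fw (S m) - fw m))
     (fun m => 2 / INR n * ln (INR m) ^ p + L ^ p / INR n * (/ (INR n - INR m) - / INR m)).
  rewrite hn1 in H. change (INR 1) with 1 in H. rewrite ln_1 in H.
  have e3 : INR n - INR (n - 1) = 1.
  { rewrite <- hn1. exact sub_last. }
  rewrite e3 in H.
  have hb := lnpow_bounds n (n-1) p ltac:(lia) ltac:(lia). fold L in hb.
  have h0 := pow0_ge0 p.
  have hn1r : 1 <= INR (n - 1) by (apply INR_pos_of; lia).
  have hi1 : 0 < / INR (n - 1) <= 1.
  { split; [apply Rinv_0_lt_compat; lra|]. rewrite <- Rinv_1. apply Rinv_le_contravar; lra. }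
  have hnm : 1 <= INR n - 1 by lra.
  eapply Rle_trans; [apply H|].
  { intros m hm. apply in_seq_b in hm. destruct hm as [h1 h2].
    have hm1 := INR_pos_of _ h1.
    have hD : 1 <= INR n - INR (S m) by (apply INR_n_sub; lia).
    have hw1 := w_bound m h1 ltac:(lia).
    have hw2 := w_bound (S m) ltac:(lia) ltac:(lia).
    have hmn : (m <= n)%nat by lia.
    have hb1 := lnpow_bounds n m p h1 hmn. fold L in hb1.
    unfold fw, Rdiv. rewrite (INR_S' m) in hD hw2 |- *.
    set x := ln (INR m) ^ p in hb1 |- *. set y := ln (INR m + 1) ^ p.
    have hxy : x <= y.
    { unfold x, y. apply pow_incr. split; [apply ln_ge0; lra|apply ln_mono; lra]. }
    set w1 := / (INR m * (INR n - INR m)). set w2 := / ((INR m + 1) * (INR n - (INR m + 1))).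
    have ew1 : w1 = / INR n * (/ INR m + / (INR n - INR m)) by (unfold w1; field; lra).
    have ew2 : w2 = / INR n * (/ (INR m + 1) + / (INR n - (INR m + 1))) by (unfold w2; field; lra).
    have ha : / (INR m + 1) <= / INR m by (apply Rinv_le_contravar; lra).
    have hb' : / (INR n - INR m) <= / (INR n - (INR m + 1)) by (apply Rinv_le_contravar; lra).
    change (/ ((INR m + 1) * (INR n - (INR m + 1)))) with w2 in hw2.
    set B := w2 - w1.
    have hB : Rabs B <= / INR n * ((/ INR m - / (INR m + 1)) + (/ (INR n - (INR m + 1)) - / (INR n - INR m))).
    { unfold B. rewrite ew1 ew2. apply Rabs_le. split; nra. }
    unfold Rdiv. replace (y * w2 - x * w1) with ((y - x) * w2 + x * B) by (unfold B; ring).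
    eapply Rle_trans; [apply Rabs_triang|].
    rewrite !Rabs_mult (Rabs_pos_eq (y - x)); [|lra]. rewrite (Rabs_pos_eq x (proj1 hb1)) (Rabs_pos_eq w2); [|unfold Rdiv in hw2; lra].
    have e1 : (y - x) * w2 <= (y - x) * (2 * / INR n).
    { apply Rmult_le_compat_l; [lra|]. unfold Rdiv in hw2. lra. }
    have e2 : x * Rabs B <= L ^ p * (/ INR n * ((/ INR m - / (INR m + 1)) + (/ (INR n - (INR m + 1)) - / (INR n - INR m)))).
    { apply Rmult_le_compat; try lra. apply Rabs_pos. }
    lra. }
  unfold Rdiv. 
  have : L ^ p * / INR n * (/ 1 - 1 - (/ INR (n - 1) - / INR (n - 1))) <= 0 by (rewrite Rinv_1; lra).
  have : 2 * / INR n * (ln (INR (n - 1)) ^ p - 0 ^ p) <= 2 * / INR n * L ^ p.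
  { apply Rmult_le_compat_l; lra. }
  rewrite Rinv_1.
  have : L ^ p * / INR n * (1 - / INR (n - 1) - (/ (INR n - 1) - 1)) <= L ^ p * / INR n * 2.
  { apply Rmult_le_compat_l; [nra|].
    have : 0 <= / (INR n - 1) by (apply Rlt_le, Rinv_0_lt_compat; lra). lra. }
  lra.
Qed.

End Fixed.


Lemma sinlb a : 0 <= a <= 1 -> a - a * a * a / 6 - a / 5040 <= sin_lb a.
Proof.
intros h. unfold sin_lb, sin_approx. simpl sum_f_R0. unfold sin_term.
replace (INR (Factorial.fact (2 * 0 + 1))) with 1 by (simpl; ring).
replace (INR (Factorial.fact (2 * 1 + 1))) with 6 by (simpl; ring).
replace (INR (Factorial.fact (2 * 2 + 1))) with 120 by (simpl; ring).
replace (INR (Factorial.fact (2 * 3 + 1))) with 5040 by (simpl; ring).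
simpl.
have h5 : 0 <= a * (a * (a * (a * (a * 1)))) by (have := pow_le a 5; simpl; intros; nra).
have h7 : a * (a * (a * (a * (a * (a * (a * 1)))))) <= a.
{ have := pow_incr a 1 6. have := pow_le a 6. simpl. nra. }
lra.
Qed.

Lemma sin_lower u : 0 < u <= PI / 2 -> 2 * u / 5 <= sin u.
Proof.
  intros [h1 h2]. have hp := PI_4.
  destruct (Rle_lt_dec u 1) as [hu|hu].
  - have := sinlb u (conj (Rlt_le _ _ h1) hu).
    have := SIN u ltac:(lra) ltac:(lra). nra.
  - have h := sin_incr_1 1 u ltac:(lra) ltac:(lra) ltac:(lra) ltac:(lra) ltac:(lra).
    have := sinlb 1 ltac:(lra). have := SIN 1 ltac:(lra) ltac:(have := PI2_1; lra).
    lra.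
Qed.

Lemma Cpow_polar r g m :
  Cpow (r * cos g, r * sin g) m = (r ^ m * cos (INR m * g), r ^ m * sin (INR m * g)).
Proof.
  induction m as [|m IH].
  - simpl. rewrite Rmult_0_l cos_0 sin_0. unfold C1. apply injective_projections; simpl; ring.
  - change (Cpow (r * cos g, r * sin g) m.+1) with (Cmul (r * cos g, r * sin g) (Cpow (r * cos g, r * sin g) m)).
    rewrite IH. rewrite S_INR.
    replace ((INR m + 1) * g) with (g + INR m * g) by ring.
    rewrite cos_plus sin_plus. unfold Cmul; apply injective_projections; simpl; ring.
Qed.

Lemma Cnorm_polar r g : Cnorm (r * cos g, r * sin g) = Rabs r.
Proof.
  rewrite Cnorm_pair.
  replace (r * cos g * (r * cos g) + r * sin g * (r * sin g)) with
    (Rsqr r * ((sin g)² + (cos g)²)) by (unfold Rsqr; ring).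
  rewrite sin2_cos2 Rmult_1_r. apply sqrt_Rsqr_abs.
Qed.

Lemma Cnorm_Cpow z m : Cnorm z = 1 -> Cnorm (Cpow z m) = 1.
Proof.
  intros h. induction m; simpl.
  - unfold C1. rewrite Cnorm_pair. replace (1 * 1 + 0 * 0) with 1 by ring. apply sqrt_1.
  - rewrite Cnorm_mul h IHm. ring.
Qed.

Lemma csum_app {A} (l1 l2 : list A) F : csum (List.app l1 l2) F = Cadd (csum l1 F) (csum l2 F).
Proof. induction l1; simpl. - unfold csum; simpl; ceq. - rewrite !csum_cons IHl1. ceq. Qed.

Lemma Cmul_Cadd_r a b c : Cmul a (Cadd b c) = Cadd (Cmul a b) (Cmul a c).
Proof. ceq. Qed.

Lemma sbp_step z h1 hN hN1 P S0 S1 :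
  Cmul (Csub C1 z) S0 = Cadd (Csub (Cscale h1 z) (Cscale hN P)) S1 ->
  Cmul (Csub C1 z) (Cadd S0 (Cadd (Cscale hN1 P) C0)) =
  Cadd (Csub (Cscale h1 z) (Cscale hN1 (Cmul z P))) (Cadd S1 (Cadd (Cscale (hN1 - hN) P) C0)).
Proof. intros H. rewrite Cmul_Cadd_r H. ceq. Qed.

Lemma sbp_id (z : Cx) (h : nat -> R) (N : nat) :
  Cmul (Csub C1 z) (csum (List.seq 1 (S N)) (fun m => Cscale (h m) (Cpow z m))) =
  Cadd (Csub (Cscale (h 1%nat) z) (Cscale (h (S N)) (Cpow z (S (S N)))))
       (csum (List.seq 1 N) (fun m => Cscale (h (S m) - h m) (Cpow z (S m)))).
Proof.
  induction N as [|N IH].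
  - rewrite /= /csum /=. set P := Cpow z 1. change (Cpow z 2) with (Cmul z P).
    change (h 1%nat) with (h 1%nat). ceq.
  - rewrite seq_S. rewrite csum_app csum_cons csum_nil.
    rewrite {2}(seq_S N) csum_app csum_cons csum_nil.
    change (Nat.add 1 (S N)) with (S (S N)). change (Nat.add 1 N) with (S N).
    change (Cpow z (S (S (S N)))) with (Cmul z (Cpow z (S (S N)))).
    apply sbp_step. exact IH.
Qed.

Lemma sbp (z : Cx) (h : nat -> R) (N : nat) : Cnorm z = 1 ->
  Cnorm (Csub C1 z) * Cnorm (csum (List.seq 1 (S N)) (fun m => Cscale (h m) (Cpow z m)))
  <= Rabs (h 1%nat) + Rabs (h (S N)) + rsum (List.seq 1 N) (fun m => Rabs (h (S m) - h m)).
Proof.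
  intros hz. rewrite <- Cnorm_mul, sbp_id.
  eapply Rle_trans; [apply Cnorm_tri|].
  apply Rplus_le_compat.
  - eapply Rle_trans; [apply Cnorm_tri_sub|].
    rewrite !Cnorm_scale hz Cnorm_Cpow; [|exact hz]. lra.
  - eapply Rle_trans; [apply Cnorm_csum|]. right. apply rsum_ext_in.
    intros m _. rewrite Cnorm_scale Cnorm_Cpow; [ring|exact hz].
Qed.

Lemma one_sub_polar θ : Cnorm (Csub C1 (cos θ, sin θ)) = 2 * Rabs (sin (θ / 2)).
Proof.
  unfold Csub, Cadd, Copp, C1; simpl. rewrite Cnorm_pair.
  replace ((1 + - cos θ) * (1 + - cos θ) + (0 + - sin θ) * (0 + - sin θ)) with
    (2 - 2 * cos θ + ((sin θ)² + (cos θ)² - 1)) by (unfold Rsqr; ring).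
  rewrite sin2_cos2.
  replace θ with (2 * (θ / 2)) at 1 by field. rewrite cos_2a_sin.
  replace (2 - 2 * (1 - 2 * sin (θ / 2) * sin (θ / 2)) + (1 - 1)) with
    (Rsqr (2 * sin (θ / 2))) by (unfold Rsqr; ring).
  rewrite sqrt_Rsqr_abs Rabs_mult Rabs_right; lra.
Qed.

Lemma cos_gap gi gj γ : -PI < gi < PI -> -PI < gj < PI -> 0 < γ ->
  γ <= Rabs (gi - gj) -> γ <= Rabs (PI - gi) -> γ <= Rabs (PI - gj) ->
  2 * γ / 5 <= Cnorm (Csub C1 (cos (gi - gj), sin (gi - gj))).
Proof.
  intros hi hj hg h1 h2 h3. rewrite one_sub_polar.
  set θ := gi - gj.
  have key : forall t, 0 < t < PI -> γ <= 2 * t -> γ <= 2 * (PI - t) -> γ / 5 <= sin t.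
  { intros t ht ha hb.
    destruct (Rle_lt_dec t (PI / 2)) as [hl|hl].
    - have := sin_lower t (conj (proj1 ht) hl). lra.
    - have := sin_lower (PI - t) ltac:(lra). rewrite sin_PI_x. lra. }
  rewrite Rabs_pos_eq in h2; [|lra]. rewrite Rabs_pos_eq in h3; [|lra].
  destruct (Rle_lt_dec 0 θ) as [hp|hn].
  - rewrite Rabs_pos_eq in h1; [|unfold θ in *; lra].
    have ht : 0 < θ / 2 < PI by (unfold θ in *; lra).
    have := key (θ / 2) ht ltac:(unfold θ in *; lra) ltac:(unfold θ in *; lra).
    rewrite Rabs_pos_eq; [lra|]. have := sin_gt_0 (θ/2) (proj1 ht) (proj2 ht). lra.
  - rewrite Rabs_left in h1; [|unfold θ in *; lra].
    have ht : 0 < - θ / 2 < PI by (unfold θ in *; lra).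
    have := key (- θ / 2) ht ltac:(unfold θ in *; lra) ltac:(unfold θ in *; lra).
    replace (θ / 2) with (- (- θ / 2)) by field. rewrite sin_neg Rabs_Ropp.
    rewrite Rabs_pos_eq; [lra|]. have := sin_gt_0 (-θ/2) (proj1 ht) (proj2 ht). lra.
Qed.


Lemma csum_split (zs : list (R * nat)) (G : R * nat -> Cx) a :
  NoDup (map fst zs) -> In a zs ->
  csum zs G = Cadd (G a) (csum zs (fun b => if Req_EM_T (fst b) (fst a) then C0 else G b)).
Proof.
  induction zs as [|b zs IH]; intros hnd hin; [destruct hin|].
  simpl in hnd. inversion hnd as [|x y hni hnd' e]; subst.
  rewrite !csum_cons.
  destruct hin as [e0|hin0].
  - revert hni. rewrite e0. intros hni.
    destruct (Req_EM_T (fst a) (fst a)) as [e1|h]; [|congruence].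
    rewrite (csum_ext_in zs (fun b0 => if Req_EM_T (fst b0) (fst a) then C0 else G b0) G).
    + ceq.
    + intros x hx. destruct (Req_EM_T (fst x) (fst a)) as [e|]; [|reflexivity].
      exfalso. apply hni. rewrite -e. apply in_map. exact hx.
  - destruct (Req_EM_T (fst b) (fst a)) as [eb|nb].
    + exfalso; apply hni; rewrite eb; apply in_map; exact hin0.
    + rewrite (IH hnd' hin0). ceq.
Qed.

Lemma pow_add_le u v r : 0 <= u -> 0 <= v -> u ^ S r + v ^ S r <= (u + v) ^ S r.
Proof.
  intros hu hv. induction r as [|r IH]; [simpl; lra|].
  have h1 : 0 <= u ^ S r by (apply pow_le; lra).
  have h2 : 0 <= v ^ S r by (apply pow_le; lra).
  change ((u + v) ^ S (S r)) with ((u + v) * (u + v) ^ S r).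
  change (u ^ S (S r)) with (u * u ^ S r). change (v ^ S (S r)) with (v * v ^ S r).
  have : (u + v) * (u ^ S r + v ^ S r) <= (u + v) * (u + v) ^ S r.
  { apply Rmult_le_compat_l; lra. }
  nra.
Qed.

Lemma rsum_pow_le {A} (l : list A) (x : A -> R) r :
  (forall a, In a l -> 0 <= x a) -> rsum l (fun a => x a ^ S r) <= (rsum l x) ^ S r.
Proof.
  induction l as [|a l IH]; intros h.
  - rewrite !rsum_nil. simpl. lra.
  - rewrite !rsum_cons.
    have hs : 0 <= rsum l x by (apply rsum_ge0; intros; apply h; right; auto).
    have := IH (fun b hb => h b (or_intror hb)).
    have := pow_add_le (x a) (rsum l x) r (h a (or_introl (Logic.eq_refl _))) hs. lra.
Qed.

Lemma Cpow_mul_same q g n1 n2 :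
  Cmul (Cpow (alpha_of q g) n1) (Cpow (alpha_of q g) n2) = Cpow (alpha_of q g) (n1 + n2).
Proof.
  unfold alpha_of. rewrite !Cpow_polar plus_INR pow_add.
  unfold Cmul; simpl. apply injective_projections; simpl.
  - rewrite Rmult_plus_distr_r cos_plus. ring.
  - rewrite Rmult_plus_distr_r sin_plus. ring.
Qed.

Lemma Cpow_mul_diff q ga gb n1 n2 :
  Cmul (Cpow (alpha_of q ga) n1) (Cpow (alpha_of q gb) n2) =
  Cmul (Cpow (alpha_of q gb) (n1 + n2)) (Cpow (cos (ga - gb), sin (ga - gb)) n1).
Proof.
  unfold alpha_of. rewrite !Cpow_polar.
  have e : (cos (ga - gb), sin (ga - gb)) = (1 * cos (ga - gb), 1 * sin (ga - gb)) by f_equal; ring.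
  rewrite e Cpow_polar pow1 plus_INR pow_add.
  have e1 : INR n1 * ga + INR n2 * gb = (INR n1 + INR n2) * gb + INR n1 * (ga - gb) by ring.
  set r := sqrt q. set A := INR n1 * ga. set B := INR n2 * gb.
  set X := (INR n1 + INR n2) * gb. set Y := INR n1 * (ga - gb).
  have hc : cos A * cos B - sin A * sin B = cos X * cos Y - sin X * sin Y.
  { rewrite -cos_plus -cos_plus. f_equal. exact e1. }
  have hs : cos A * sin B + sin A * cos B = cos X * sin Y + sin X * cos Y.
  { rewrite (Rplus_comm (cos A * sin B)) (Rplus_comm (cos X * sin Y)) -sin_plus -sin_plus.
    f_equal. exact e1. }
  unfold Cmul. apply injective_projections; cbn [fst snd].
  - transitivity (r ^ n1 * r ^ n2 * (cos A * cos B - sin A * sin B)); [ring|].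
    rewrite hc. ring.
  - transitivity (r ^ n1 * r ^ n2 * (cos A * sin B + sin A * cos B)); [ring|].
    rewrite hs. ring.
Qed.

Lemma Cnorm_alpha_pow q g m : 0 <= q -> Cnorm (Cpow (alpha_of q g) m) = sqrt q ^ m.
Proof.
  intros hq. unfold alpha_of. rewrite Cpow_polar Cnorm_polar Rabs_pos_eq; [reflexivity|].
  apply pow_le. apply sqrt_pos.
Qed.


Lemma fold_min_le v vs x : In x (v :: vs) -> fold_right Rmin v vs <= x.
Proof.
  revert x. induction vs as [|w vs IH]; intros x hx.
  - destruct hx as [<-|[]]. simpl; lra.
  - simpl. destruct hx as [<-|[<-|hx]].
    + eapply Rle_trans; [apply Rmin_r|]. apply IH. now left.
    + apply Rmin_l.
    + eapply Rle_trans; [apply Rmin_r|]. apply IH. now right.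
Qed.

Lemma fold_min_pos v vs : (forall x, In x (v :: vs) -> 0 < x) -> 0 < fold_right Rmin v vs.
Proof.
  induction vs as [|w vs IH]; intros h.
  - simpl. apply h. now left.
  - simpl. apply Rmin_glb_lt.
    + apply h. right; now left.
    + apply IH. intros x [<-|hx]; apply h; [now left|right; now right].
Qed.

Lemma gamma_le zs x : In x (gamma_vals (map fst zs)) -> gamma_min zs <= x.
Proof.
  unfold gamma_min. destruct (gamma_vals (map fst zs)) as [|v vs] eqn:E; [intros []|].
  intros h. apply fold_min_le. exact h.
Qed.

Lemma gamma_pos zs : (forall x, In x (gamma_vals (map fst zs)) -> 0 < x) -> 0 < gamma_min zs.
Proof.
  unfold gamma_min. destruct (gamma_vals (map fst zs)) as [|v vs] eqn:E.
  - intros _. exact PI_RGT_0.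
  - intros h. apply fold_min_pos. exact h.
Qed.

Section Gamma.
Variable zs : list (R * nat).
Hypothesis hz : forall a, In a zs -> - PI < fst a < PI /\ fst a <> 0.
Hypothesis hnd : NoDup (map fst zs).

Lemma gvals_in x : In x (gamma_vals (map fst zs)) -> 0 < x.
Proof.
  unfold gamma_vals. intros h. apply in_flat_map in h. destruct h as [g [hg hx]].
  apply in_map_iff in hg. destruct hg as [a [ea ha]]. subst g.
  destruct (hz a ha) as [[h1 h2] h3].
  destruct hx as [<-|[<-|hx]].
  - apply Rabs_pos_lt. exact h3.
  - apply Rabs_pos_lt. lra.
  - apply in_flat_map in hx. destruct hx as [y [hy hx]].
    destruct (Req_EM_T (fst a) y) as [e|ne]; [destruct hx|].
    destruct hx as [<-|[]]. apply Rabs_pos_lt. lra.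
Qed.

Lemma gamma_pos' : 0 < gamma_min zs.
Proof. apply gamma_pos. exact gvals_in. Qed.

Lemma gamma_le_abs a : In a zs -> gamma_min zs <= Rabs (fst a).
Proof.
  intros ha. apply gamma_le. unfold gamma_vals. apply in_flat_map.
  exists (fst a). split; [apply in_map; exact ha|now left].
Qed.

Lemma gamma_le_pi a : In a zs -> gamma_min zs <= Rabs (PI - fst a).
Proof.
  intros ha. apply gamma_le. unfold gamma_vals. apply in_flat_map.
  exists (fst a). split; [apply in_map; exact ha|right; now left].
Qed.

Lemma gamma_le_diff a b : In a zs -> In b zs -> fst a <> fst b ->
  gamma_min zs <= Rabs (fst a - fst b).
Proof.
  intros ha hb hne. apply gamma_le. unfold gamma_vals. apply in_flat_map.
  exists (fst a). split; [apply in_map; exact ha|right; right].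
  apply in_flat_map. exists (fst b). split; [apply in_map; exact hb|].
  destruct (Req_EM_T (fst a) (fst b)) as [e|ne]; [contradiction|now left].
Qed.

Lemma z_gap a b : In a zs -> In b zs -> fst a <> fst b ->
  2 * gamma_min zs / 5 <= Cnorm (Csub C1 (cos (fst a - fst b), sin (fst a - fst b))).
Proof.
  intros ha hb hne. apply cos_gap.
  - exact (proj1 (hz a ha)).
  - exact (proj1 (hz b hb)).
  - exact gamma_pos'.
  - apply gamma_le_diff; assumption.
  - apply gamma_le_pi; assumption.
  - apply gamma_le_pi; assumption.
Qed.

Lemma alpha_distinct q a b : 0 < q -> In a zs -> In b zs -> fst a <> fst b ->
  alpha_of q (fst a) <> alpha_of q (fst b).
Proof.
  intros hq ha hb hne e. have hg := z_gap a b ha hb hne.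
  have hgp := gamma_pos'.
  unfold alpha_of in e. injection e as e1 e2.
  have hs : 0 < sqrt q by apply sqrt_lt_R0.
  have c1 : cos (fst a) = cos (fst b) by (apply (Rmult_eq_reg_l (sqrt q)); lra).
  have s1 : sin (fst a) = sin (fst b) by (apply (Rmult_eq_reg_l (sqrt q)); lra).
  rewrite cos_minus sin_minus c1 s1 in hg.
  have e0 : Csub C1 (cos (fst b) * cos (fst b) + sin (fst b) * sin (fst b),
      sin (fst b) * cos (fst b) - cos (fst b) * sin (fst b)) = C0.
  { unfold Csub, Cadd, Copp, C1, C0. apply injective_projections; simpl.
    - have := sin2_cos2 (fst b). unfold Rsqr. lra.
    - ring. }
  rewrite e0 Cnorm_C0 in hg. lra.
Qed.
End Gamma.


Definition Yab q n p (a b : R * nat) :=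
  csum (List.seq 1 (n - 1)) (fun n1 => Cscale (INR (snd a) ^ S p * INR (snd b) * fw n p n1)
    (Cmul (Cpow (alpha_of q (fst a)) n1) (Cpow (alpha_of q (fst b)) (n - n1)))).

Lemma Cmul_scale2 c1 c2 X Y : Cmul (Cscale c1 X) (Cscale c2 Y) = Cscale (c1 * c2) (Cmul X Y).
Proof. ceq. Qed.

Lemma LHS_form q zs n p : (2 <= n)%nat ->
  fold_right Cadd C0 (map (fun n1 => Cmul (Zsum q zs (S p) n1) (Zsum q zs 1 (n - n1)))
    (List.seq 1 (n - 1)))
  = Cscale ((-1) ^ p / INR (fact p)) (csum zs (fun a => csum zs (fun b => Yab q n p a b))).
Proof.
  intros hn.
  change (fold_right Cadd C0 (map (fun n1 => Cmul (Zsum q zs (S p) n1) (Zsum q zs 1 (n - n1)))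
    (List.seq 1 (n - 1)))) with
    (csum (List.seq 1 (n - 1)) (fun n1 => Cmul (Zsum q zs (S p) n1) (Zsum q zs 1 (n - n1)))).
  rewrite (csum_ext_in _ _ (fun n1 => Cscale ((-1) ^ p / INR (fact p)) (csum zs (fun a => csum zs
     (fun b => Cscale (INR (snd a) ^ S p * INR (snd b) * fw n p n1)
       (Cmul (Cpow (alpha_of q (fst a)) n1) (Cpow (alpha_of q (fst b)) (n - n1)))))))).
  - rewrite csum_scale. f_equal. rewrite csum_swap. apply csum_ext_in. intros a _.
    rewrite csum_swap. reflexivity.
  - intros n1 hn1. apply in_seq_b in hn1. destruct hn1 as [h1 h2].
    unfold Zsum.
    change (fold_right Cadd C0 ?l) with (fold_right Cadd C0 l).
    rewrite Cmul_scale2.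
    have e1 : (S p - 1)%nat = p by lia.
    have e2 : (1 - 1)%nat = 0%nat by lia.
    rewrite e1 e2.
    have hn1 : 1 <= INR n1 by (apply INR_pos_of; lia).
    have hnn : INR (n - n1) = INR n - INR n1 by (apply minus_INR; lia).
    have hD : 1 <= INR n - INR n1 by (apply INR_n_sub; lia).
    have hf := INR_fact_neq_0 p.
    replace ((-1) ^ S p / INR (fact p) * ((-1) ^ 1 / INR (fact 0))) with ((-1) ^ p / INR (fact p))
      by (simpl; field; exact hf).
    f_equal.
    change (fold_right Cadd C0 (map ?F zs)) with (csum zs F).
    rewrite csum_mulr. apply csum_ext_in. intros a _.
    rewrite csum_mull. apply csum_ext_in. intros b _.
    rewrite Cmul_scale2. f_equal.
    unfold fw. rewrite hnn. simpl pow. field. lra.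
Qed.

Lemma csum_scale_const {A} (l : list A) c f X :
  csum l (fun x => Cscale (c * f x) X) = Cscale (c * rsum l f) X.
Proof.
  induction l as [|a l IH]; [rewrite csum_nil rsum_nil; ceq|].
  rewrite csum_cons rsum_cons IH. ceq.
Qed.

Lemma Csub_scale2 a b c d X :
  Csub (Cscale a (Cscale b X)) (Cscale c (Cscale d X)) = Cscale (a * b - c * d) X.
Proof. ceq. Qed.

Lemma diag_bound q n p g m : 0 <= q -> (2 <= n)%nat ->
  Cnorm (Csub (Cscale (INR (S p)) (Yab q n p (g, m) (g, m)))
     (Cscale (INR (S (S p))) (Cscale (INR m ^ S (S p) * ln (INR n) ^ (S p) / INR n)
        (Cpow (alpha_of q g) n))))
  <= INR m ^ S (S p) * sqrt q ^ n * (4 * INR (S (S p)) ^ 2 * ln (INR n) ^ p / INR n).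
Proof.
  intros hq hn.
  have eY : Yab q n p (g, m) (g, m) =
    Cscale (INR m ^ S p * INR m * rsum (List.seq 1 (n - 1)) (fw n p)) (Cpow (alpha_of q g) n).
  { unfold Yab. simpl fst. simpl snd. rewrite -csum_scale_const.
    apply csum_ext_in. intros n1 hn1. apply in_seq_b in hn1.
    rewrite Cpow_mul_same. have -> : (n1 + (n - n1))%nat = n by lia. reflexivity. }
  rewrite eY Csub_scale2 Cnorm_scale Cnorm_alpha_pow; [|exact hq].
  set L := ln (INR n). set Sg := rsum (List.seq 1 (n - 1)) (fw n p).
  set T1 := rsum (List.seq 1 (n - 1)) (fun m0 => ln (INR m0) ^ p / INR m0).
  set T2 := rsum (List.seq 1 (n - 1)) (fun m0 => ln (INR m0) ^ p / (INR n - INR m0)).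
  have hn2 := n_ge2 n hn.
  have eS : Sg = / INR n * (T1 + T2).
  { unfold Sg, T1, T2. rewrite -rsum_add -rsum_scale. apply rsum_ext_in.
    intros m0 hm0. apply in_seq_b in hm0. destruct hm0 as [h1 h2].
    have hm1 : 1 <= INR m0 by (apply INR_pos_of; lia).
    have hD : 1 <= INR n - INR m0 by (apply INR_n_sub; lia).
    unfold fw. field. lra. }
  have hT1 := T1_bound n p hn. fold L T1 in hT1.
  have hT2 := T2_bound n p hn. fold L T2 in hT2.
  have hLp := Lp_ge0 n p hn. fold L in hLp.
  have hm : 0 <= INR m ^ S (S p) by (apply pow_le; apply pos_INR).
  have hsq : 0 <= sqrt q ^ n by (apply pow_le; apply sqrt_pos).
  replace (INR (S p) * (INR m ^ S p * INR m * Sg) - INR (S (S p)) * (INR m ^ S (S p) * L ^ S p / INR n))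
    with (INR m ^ S (S p) * (/ INR n * ((INR (S p) * T1 - L ^ S p) + INR (S p) * (T2 - L ^ S p))))
    by (rewrite eS; rewrite !S_INR; simpl; field; lra).
  rewrite Rabs_mult Rabs_pos_eq; [|exact hm].
  have hin : 0 < / INR n by (apply Rinv_0_lt_compat; lra).
  rewrite Rabs_mult (Rabs_pos_eq (/ INR n)); [|lra].
  have hp0 : 0 <= INR p by apply pos_INR.
  have key : Rabs (INR (S p) * T1 - L ^ S p + INR (S p) * (T2 - L ^ S p)) <=
             4 * INR (S (S p)) ^ 2 * L ^ p.
  { eapply Rle_trans; [apply Rabs_triang|].
    rewrite Rabs_mult (Rabs_pos_eq (INR (S p))); [|apply pos_INR].
    have h2 : Rabs (T2 - L ^ S p) <= (1 + 3 * INR p) * L ^ p by (apply Rabs_le; nra).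
    have h3 : INR (S p) * Rabs (T2 - L ^ S p) <= INR (S p) * ((1 + 3 * INR p) * L ^ p).
    { apply Rmult_le_compat_l; [apply pos_INR|exact h2]. }
    rewrite !S_INR in hT1 h3 |- *. nra. }
  have : INR m ^ S (S p) * (/ INR n * Rabs (INR (S p) * T1 - L ^ S p + INR (S p) * (T2 - L ^ S p)))
         <= INR m ^ S (S p) * (/ INR n * (4 * INR (S (S p)) ^ 2 * L ^ p)).
  { apply Rmult_le_compat_l; [exact hm|]. apply Rmult_le_compat_l; lra. }
  unfold Rdiv. nra.
Qed.

Lemma Cscale_mul_comm w X Y : Cscale w (Cmul X Y) = Cmul X (Cscale w Y).
Proof. ceq. Qed.

Lemma off_bound q n p a b γ : 0 <= q -> (2 <= n)%nat -> 0 < γ ->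
  2 * γ / 5 <= Cnorm (Csub C1 (cos (fst a - fst b), sin (fst a - fst b))) ->
  Cnorm (Yab q n p a b) <=
  INR (snd a) ^ S p * INR (snd b) * sqrt q ^ n * (20 * ln (INR n) ^ p / (INR n * γ)).
Proof.
  intros hq hn hg hz.
  set z := (cos (fst a - fst b), sin (fst a - fst b)) in hz.
  set c := INR (snd a) ^ S p * INR (snd b).
  have ey : Yab q n p a b = Cmul (Cpow (alpha_of q (fst b)) n)
      (Cscale c (csum (List.seq 1 (n - 1)) (fun n1 => Cscale (fw n p n1) (Cpow z n1)))).
  { unfold Yab. rewrite -csum_scale csum_mull. apply csum_ext_in. intros n1 hn1.
    apply in_seq_b in hn1.
    rewrite Cpow_mul_diff. have -> : (n1 + (n - n1))%nat = n by lia.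
    rewrite Cscale_mul_comm. f_equal. fold z. unfold c. ceq. }
  rewrite ey Cnorm_mul Cnorm_alpha_pow; [|exact hq]. rewrite Cnorm_scale.
  have hc : 0 <= c by (unfold c; apply Rmult_le_pos; [apply pow_le|]; apply pos_INR).
  rewrite Rabs_pos_eq; [|exact hc].
  have hsq : 0 <= sqrt q ^ n by (apply pow_le; apply sqrt_pos).
  have hn2 := n_ge2 n hn.
  set L := ln (INR n).
  have hLp := Lp_ge0 n p hn. fold L in hLp.
  have hz1 : Cnorm z = 1.
  { unfold z. rewrite -(Rmult_1_l (cos _)) -(Rmult_1_l (sin _)) Cnorm_polar. apply Rabs_R1. }
  have e : (n - 1)%nat = S (n - 2) by lia.
  set Sg := csum (List.seq 1 (n - 1)) _.
  have hS : Cnorm (Csub C1 z) * Cnorm Sg <= 8 * L ^ p / INR n.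
  { unfold Sg. rewrite e. eapply Rle_trans; [apply sbp; exact hz1|].
    have h1 := fw_bound n p hn 1 ltac:(lia) ltac:(lia).
    have h2 := fw_bound n p hn (S (n - 2)) ltac:(lia) ltac:(lia).
    have h3 := fw_var n p hn. fold L in h1. fold L in h2. fold L in h3.
    rewrite (Rabs_pos_eq (fw n p 1)); [|lra]. rewrite (Rabs_pos_eq (fw n p (S (n - 2)))); [|lra].
    unfold Rdiv in *. lra. }
  have hSg : 0 <= Cnorm Sg by apply Cnorm_ge0.
  have hb : Cnorm Sg <= 20 * L ^ p / (INR n * γ).
  { apply (Rmult_le_reg_l (2 * γ / 5)); [lra|].
    have : 2 * γ / 5 * Cnorm Sg <= Cnorm (Csub C1 z) * Cnorm Sg by (apply Rmult_le_compat_r; lra).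
    replace (2 * γ / 5 * (20 * L ^ p / (INR n * γ))) with (8 * L ^ p / INR n) by (field; lra).
    lra. }
  have : sqrt q ^ n * (c * Cnorm Sg) <= sqrt q ^ n * (c * (20 * L ^ p / (INR n * γ))).
  { apply Rmult_le_compat_l; [exact hsq|]. apply Rmult_le_compat_l; [exact hc|exact hb]. }
  unfold c in *. lra.
Qed.

From mathcomp Require Import Rstruct complex.
Section AlgPart.
Import GRing.Theory Num.Theory.
Local Open Scope ring_scope.

Definition toC (a : Cx) : R[i] := Complex (fst a) (snd a).

Lemma toC_mul a b : toC (Cmul a b) = (toC a * toC b). 
Proof. by []. Qed.
Lemma toC_add a b : toC (Cadd a b) = (toC a + toC b). 
Proof. by []. Qed.
Lemma toC_C0 : toC C0 = 0. 
Proof. by []. Qed.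
Lemma toC_C1 : toC C1 = 1. 
Proof. by []. Qed.
Lemma toC_opp a : toC (Copp a) = (- toC a). 
Proof. by []. Qed.
Lemma toC_sub a b : toC (Csub a b) = (toC a - toC b). 
Proof. by []. Qed.

Lemma toC_inj a b : toC a = toC b -> a = b.
Proof. case: a => a1 a2; case: b => b1 b2; rewrite /toC /=. by case=> -> ->. Qed.

Lemma toC_surj (z : R[i]) : exists a, toC a = z.
Proof. case: z => x y. by exists (x, y). Qed.

Lemma toC_pow a n : toC (Cpow a n) = toC a ^+ n.
Proof.
  elim: n => [|n IH]; first by rewrite expr0 toC_C1.
  by rewrite exprS -IH -toC_mul.
Qed.

Lemma toC_peval Q u : toC (peval Q u) = (Poly (map toC Q)).[toC u].
Proof.
  elim: Q => [|c Q IH] /=; first by rewrite horner0 toC_C0.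
  by rewrite horner_cons toC_add toC_mul IH addrC mulrC.
Qed.

Lemma poly_ext (p q : {poly R[i]}) : (forall x, p.[x] = q.[x]) -> p = q.
Proof.
  move=> H. apply/eqP; rewrite -subr_eq0; apply/negPn/negP => hr.
  set r := p - q in hr.
  have h1 : all (root r) [seq i%:R | i <- iota 0 (size r)].
  { apply/allP => x /mapP [i _ ->]. by rewrite /root /r hornerD hornerN H subrr. }
  have h2 : uniq [seq (i%:R : R[i]) | i <- iota 0 (size r)].
  { rewrite map_inj_uniq ?iota_uniq // => i j /eqP. by rewrite eqr_nat => /eqP. }
  have := max_poly_roots hr h1 h2.
  by rewrite size_map size_iota ltnn.
Qed.

Lemma dvd_from_fact (p pQ : {poly R[i]}) (a : R[i]) m :
  a != 0 -> p = (1 - a *: 'X) ^+ m * pQ -> ('X - (a^-1)%:P) ^+ m %| p.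
Proof.
  move=> ha ->.
  have e : 1 - a *: 'X = (- a) *: ('X - (a^-1)%:P).
  { by rewrite scalerBr scaleNr scaleNr opprK scale_polyC mulfV // polyC1 addrC. }
  rewrite e exprZn -scalerAl scalerAr. apply: dvdp_mulIl.
Qed.


Lemma sum_mult (l : list (R[i] * nat)%type) : forall p : {poly R[i]}, p != 0 ->
  uniq (map fst l) -> (forall x, x \in l -> ('X - x.1%:P) ^+ x.2 %| p) ->
  leq (\big[addn/O]_(x <- l) x.2) (size p).-1.
Proof.
  elim: l => [|[u m] l IH] p hp /= hu hd; first by rewrite big_nil.
  move/andP: hu => [hul hu].
  rewrite big_cons /=.
  have hdu := hd (u, m) (mem_head _ _). rewrite /= in hdu.
  set D := ('X - u%:P) ^+ m in hdu.
  set p' := p %/ D.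
  have ep : p = p' * D by rewrite divpK.
  have hp' : p' != 0.
  { apply: contraNneq hp => h. by rewrite ep h mul0r. }
  have hD : D \is monic by apply: monic_exp; apply: monicXsubC.
  have hs : size p = (addn (size p') m.+1).-1.
  { by rewrite {1}ep size_Mmonic // size_exp_XsubC. }
  have hsz : leq 1 (size p') by rewrite (size_poly_gt0 p').
  have IH' : leq (\big[addn/O]_(x <- l) x.2) (size p').-1.
  { apply: IH => // x hx.
    have hne : u - x.1 != 0.
    { rewrite subr_eq0. apply/eqP => hux. move: hul. rewrite hux.
      by move/negP; apply; apply: map_f. }
    have hc : coprimep (('X - x.1%:P) ^+ x.2) D.
    { apply: coprimep_expl. apply: coprimep_expr. exact: coprimep_XsubC2. }
    rewrite -(Gauss_dvdpl _ hc) -ep. apply: hd. by rewrite inE hx orbT. }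
  rewrite hs. move: IH' hsz. set s1 := \big[addn/O]_(x <- l) x.2. move: s1 (size p') => s1 sp. lia.
Qed.

Lemma In_mem {T : eqType} (x : T) (l : list T) : In x l <-> x \in l.
Proof.
  elim: l => [|a l IH] /=; first by split.
  rewrite inE; split.
  - case=> [->|h]; first by rewrite eqxx. by rewrite (proj1 IH h) orbT.
  - case/orP=> [/eqP->|h]; [by left|right; exact: (proj2 IH h)].
Qed.

Lemma uniq_map_In {T : eqType} (h : (Rdefinitions.RbaseSymbolsImpl.R * nat)%type -> T) zs :
  NoDup (map fst zs) ->
  (forall a b, In a zs -> In b zs -> h a = h b -> fst a = fst b) -> uniq (map h zs).
Proof.
  elim: zs => [|a zs IH] //= hnd hinj.
  inversion hnd as [|x y hni hnd' e]; subst.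
  apply/andP; split.
  - apply/negP => /mapP [b hb hab].
    have hb' : In b zs by apply/In_mem.
    have := hinj a b (or_introl erefl) (or_intror hb') hab => e.
    apply: hni. rewrite e. exact: in_map.
  - apply: IH => // x y hx hy. apply: hinj; by right.
Qed.

Lemma Lpoly_horner (F : finFieldType) (chi : {poly F} -> Cx) d u :
  toC (Lpoly chi d u) = (\poly_(i < d) toC (Lcoef chi i)).[toC u].
Proof.
  rewrite horner_poly /Lpoly (big_morph toC toC_add toC_C0).
  apply: eq_bigr => i _. by rewrite toC_mul toC_pow.
Qed.

Lemma Lcoef0 (F : finFieldType) (chi : {poly F} -> Cx) : toC (Lcoef chi 0) = toC (chi 1).
Proof.
  rewrite /Lcoef (big_morph toC toC_add toC_C0).
  have e : forall f : {ffun 'I_0 -> F}, monic_of f = 1.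
  { move=> f. by rewrite /monic_of big_ord0 expr0 addr0. }
  under eq_bigr => f _ do rewrite e.
  rewrite sumr_const card_ffun card_ord expn0. by rewrite mulr1n.
Qed.

Lemma mult_sum_bound (F : finFieldType) (chi : {poly F} -> Cx) (d : nat)
  (q : Rdefinitions.RbaseSymbolsImpl.R) (zs : list (Rdefinitions.RbaseSymbolsImpl.R * nat)%type) :
  leq 1 d -> chi 1 <> C0 -> zero_data (Lpoly chi d) q zs ->
  (forall a b, In a zs -> In b zs -> fst a <> fst b -> alpha_of q (fst a) <> alpha_of q (fst b)) ->
  leq (\big[addn/O]_(x <- zs) x.2) d.-1.
Proof.
  move=> hd hchi [hnd [hz _]] hdist.
  set pL := \poly_(i < d) toC (Lcoef chi i).
  have hpL : pL != 0.
  { apply/eqP => h. have := congr1 (fun p : {poly R[i]} => p`_0) h.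
    rewrite coef_poly hd coef0 Lcoef0 -toC_C0 => /toC_inj. exact: hchi. }
  set l := [seq ((toC (alpha_of q x.1))^-1, x.2) | x <- zs].
  have H := sum_mult l pL hpL.
  have e1 : \big[addn/O]_(x <- l) x.2 = \big[addn/O]_(x <- zs) x.2 by rewrite big_map.
  have hs : leq (size pL) d by apply: size_poly.
  suff : leq (\big[addn/O]_(x <- l) x.2) (size pL).-1.
  { rewrite e1. move: (size pL) hs => sp. move: (\big[addn/O]_(x <- zs) x.2) => s. lia. }
  apply: H.
  - rewrite /l List.map_map. apply: uniq_map_In => // a b ha hb /= hab.
    apply: NNPP => hne. apply: (hdist a b ha hb hne). apply: toC_inj. exact: (invr_inj hab).
  - move=> x /mapP [[g m] hgm ->] /=.
    have hgm' : In (g, m) zs by apply/In_mem.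
    have [_ [_ [[u [hu _]] [Q [hQ _]]]]] := hz g m hgm'.
    set a := toC (alpha_of q g).
    have ha : a != 0.
    { apply/eqP => h0. have := congr1 toC hu. rewrite toC_mul -/a h0 mul0r toC_C1.
      by move/eqP; rewrite eq_sym oner_eq0. }
    apply: (dvd_from_fact _ (Poly (map toC Q))) => //.
    apply: poly_ext => y. have [v <-] := toC_surj y.
    rewrite -Lpoly_horner hQ toC_mul toC_pow toC_sub toC_mul toC_C1 toC_peval.
    by rewrite hornerM horner_exp hornerD hornerN hornerZ hornerX hornerC.
Qed.

Lemma big_INR (zs : list (Rdefinitions.RbaseSymbolsImpl.R * nat)%type) :
  INR (\big[addn/O]_(x <- zs) x.2) = rsum zs (fun a => INR (snd a)).
Proof.
  elim: zs => [|a zs IH]; first by rewrite big_nil.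
  rewrite big_cons rsum_cons plus_INR IH. by [].
Qed.

Lemma mult_sum_bound_R (F : finFieldType) (chi : {poly F} -> Cx) (d : nat)
  (q : Rdefinitions.RbaseSymbolsImpl.R) (zs : list (Rdefinitions.RbaseSymbolsImpl.R * nat)%type) :
  leq 1 d -> chi (GRing.one _) <> C0 -> zero_data (Lpoly chi d) q zs ->
  (forall a b, In a zs -> In b zs -> fst a <> fst b -> alpha_of q (fst a) <> alpha_of q (fst b)) ->
  Rle (rsum zs (fun a => INR (snd a))) (INR d).
Proof.
  move=> hd hchi hz hdist. have h := @mult_sum_bound F chi d q zs hd hchi hz hdist.
  rewrite -big_INR. apply: le_INR. apply/leP. move: h.
  move: (\big[addn/O]_(x <- zs) x.2) => s. lia.
Qed.

End AlgPart.


Lemma diff_form p A B :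
  Csub (Cscale ((-1) ^ p / INR (fact p)) A)
       (Cscale ((-1) ^ S (S p) * INR (S (S p)) / INR (fact (S p))) B)
  = Cscale ((-1) ^ p / INR (fact (S p))) (Csub (Cscale (INR (S p)) A) (Cscale (INR (S (S p))) B)).
Proof.
  have hf := INR_fact_neq_0 p.
  have e : INR (fact (S p)) = INR (S p) * INR (fact p) by (rewrite -mult_INR; reflexivity).
  have hs : INR (S p) <> 0 by (apply not_0_INR; lia).
  unfold Csub, Cadd, Copp, Cscale. rewrite e.
  apply injective_projections; simpl; field; split; assumption.
Qed.

Lemma term_split (Y D off : Cx) c1 c2 :
  Csub (Cscale c1 (Cadd Y off)) (Cscale c2 D) = Cadd (Csub (Cscale c1 Y) (Cscale c2 D)) (Cscale c1 off).
Proof. ceq. Qed.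

Theorem lemma5p7 :
  exists K : R, forall (F : finFieldType) (M : {poly F}) (chi : {poly F} -> Cx)
    (k n : nat) (zs : list (R * nat)),
    let q := INR #|F| in
    let d := (size M).-1 in
    (1 <= d)%nat ->
    is_dirichlet_char M chi ->
    nontrivial_char M chi ->
    (2 <= k)%nat ->
    (2 <= n)%nat ->
    zero_data (Lpoly chi d) q zs ->
    Cnorm (Csub
      (fold_right Cadd C0
         (map (fun n1 => Cmul (Zsum q zs (k - 1) n1) (Zsum q zs 1 (n - n1)))
              (List.seq 1 (n - 1))))
      (Cscale ((-1) ^ k * INR k / INR (fact (k - 1)))
         (fold_right Cadd C0
            (map (fun p => Cscale (INR (snd p) ^ k * ln (INR n) ^ (k - 1) / INR n)
                                  (Cpow (alpha_of q (fst p)) n)) zs))))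
    <= K * (INR k / INR (fact (k - 1))) *
       (INR d ^ k * (INR k + / gamma_min zs) * sqrt q ^ n
        * ln (INR n) ^ (k - 2) / INR n).
Proof.
  exists 20. intros F M chi k n zs q d hd hchar hnt hk hn hzd.
  destruct k as [|[|p]]; [lia|lia|].
  have ek1 : (p.+2 - 1)%nat = p.+1 by lia.
  have ek2 : (p.+2 - 2)%nat = p by lia.
  rewrite ek1 ek2.
  have hq : 0 < q.
  { unfold q. apply lt_0_INR. apply/ltP. apply/card_gt0P. exists (GRing.zero : F). done. }
  have hzd' := hzd. destruct hzd' as [hnd [hzz _]].
  have hz : forall a, In a zs -> - PI < fst a < PI /\ fst a <> 0.
  { intros [g m] ha. destruct (hzz g m ha) as [h1 [h2 _]]. split; assumption. }
  set γ := gamma_min zs.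
  have hγ : 0 < γ := gamma_pos' zs hz.
  have hchi1 : chi (GRing.one _) <> C0.
  { apply (proj2 (proj2 (proj2 hchar) (GRing.one _))). apply coprime1p. }
  have hD : rsum zs (fun a => INR (snd a)) <= INR d.
  { apply (@mult_sum_bound_R F chi d q zs hd hchi1 hzd). intros a b ha hb hne.
    apply (alpha_distinct zs hz q a b hq ha hb hne). }
  rewrite LHS_form; [|exact hn].
  change (fold_right Cadd C0 (map ?F zs)) with (csum zs F).
  rewrite diff_form Cnorm_scale.
  have habs : Rabs ((-1) ^ p / INR (fact p.+1)) = / INR (fact p.+1).
  { unfold Rdiv. rewrite Rabs_mult -RPow_abs Rabs_Ropp Rabs_R1 pow1 Rabs_inv.
    rewrite (Rabs_pos_eq (INR _)); [ring|apply pos_INR]. }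
  rewrite habs.
  set s := sqrt q ^ n. set L := ln (INR n).
  set B1 := 4 * INR (S (S p)) ^ 2 * L ^ p / INR n.
  set B2 := 20 * L ^ p / (INR n * γ).
  have hn2 := n_ge2 n hn.
  have hLp : 0 <= L ^ p := Lp_ge0 n p hn.
  have hs : 0 <= s by (apply pow_le; apply sqrt_pos).
  have hB1 : 0 <= B1.
  { unfold B1, Rdiv. apply Rmult_le_pos; [|apply Rlt_le, Rinv_0_lt_compat; lra].
    apply Rmult_le_pos; [|exact hLp]. apply Rmult_le_pos; [lra|apply pow_le, pos_INR]. }
  have hB2 : 0 <= B2.
  { unfold B2, Rdiv. apply Rmult_le_pos; [apply Rmult_le_pos; lra|].
    apply Rlt_le, Rinv_0_lt_compat. nra. }
  have hbound : Cnorm (Csub (Cscale (INR p.+1) (csum zs (fun a => csum zs (Yab q n p a))))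
       (Cscale (INR p.+2) (csum zs (fun p0 => Cscale (INR (snd p0) ^ p.+2 * L ^ p.+1 / INR n)
          (Cpow (alpha_of q (fst p0)) n))))) <=
     rsum zs (fun a => INR (snd a) ^ S (S p) * s * B1 +
        INR (S p) * rsum zs (fun b => INR (snd a) ^ S p * INR (snd b) * s * B2)).
  { rewrite -csum_scale -csum_scale -csum_sub.
    eapply Rle_trans; [apply Cnorm_csum|]. apply rsum_le_in. intros a ha.
    rewrite (csum_split zs (Yab q n p a) a hnd ha) term_split.
    eapply Rle_trans; [apply Cnorm_tri|]. apply Rplus_le_compat.
    - destruct a as [g m]. eapply Rle_trans; [apply diag_bound; [lra|exact hn]|].
      fold L s. unfold B1. right. simpl snd. ring.
    - rewrite Cnorm_scale Rabs_pos_eq; [|apply pos_INR].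
      apply Rmult_le_compat_l; [apply pos_INR|].
      eapply Rle_trans; [apply Cnorm_csum|]. apply rsum_le_in. intros b hb.
      destruct (RIneq.Req_EM_T (fst b) (fst a)) as [e|ne].
      + rewrite Cnorm_C0. apply Rmult_le_pos; [|exact hB2].
        apply Rmult_le_pos; [|exact hs]. apply Rmult_le_pos; [apply pow_le|]; apply pos_INR.
      + eapply Rle_trans; [apply (off_bound q n p a b γ); [lra|exact hn|exact hγ|]|].
        * apply (z_gap zs hz a b ha hb). intros e; apply ne; symmetry; exact e.
        * fold L s. unfold B2. right. ring. }
  set D := rsum zs (fun a => INR (snd a)).
  set M1 := rsum zs (fun a => INR (snd a) ^ S (S p)).
  set Mp := rsum zs (fun a => INR (snd a) ^ S p).
  have hsum : rsum zs (fun a => INR (snd a) ^ S (S p) * s * B1 +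
        INR (S p) * rsum zs (fun b => INR (snd a) ^ S p * INR (snd b) * s * B2))
      = s * B1 * M1 + INR (S p) * s * B2 * (Mp * D).
  { rewrite rsum_add. f_equal.
    - unfold M1. rewrite -rsum_scale. apply rsum_ext_in; intros; ring.
    - rewrite (rsum_ext_in zs _ (fun a => (INR (S p) * s * B2 * D) * INR (snd a) ^ S p)).
      + rewrite rsum_scale. unfold Mp. ring.
      + intros a _. rewrite (rsum_ext_in zs _ (fun b => (INR (snd a) ^ S p * s * B2) * INR (snd b))).
        * rewrite rsum_scale. fold D. ring.
        * intros; ring. }
  have hpos : forall a, In a zs -> 0 <= INR (snd a) by (intros; apply pos_INR).
  have hD0 : 0 <= D by (apply rsum_ge0; exact hpos).
  have hd0 : 0 <= INR d by apply pos_INR.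
  have hD' : D <= INR d := hD.
  have hDk : D ^ S (S p) <= INR d ^ S (S p) by (apply pow_incr; lra).
  have hM1 : M1 <= INR d ^ S (S p).
  { eapply Rle_trans; [apply rsum_pow_le; exact hpos|exact hDk]. }
  have hMp0 : 0 <= Mp by (apply rsum_ge0; intros; apply pow_le, pos_INR).
  have hMpD : Mp * D <= INR d ^ S (S p).
  { have h1 : Mp <= D ^ S p by (apply rsum_pow_le; exact hpos).
    have h2 : Mp * D <= D ^ S p * D by (apply Rmult_le_compat_r; lra).
    have e : D ^ S p * D = D ^ S (S p) by (simpl; ring). lra. }
  have hM10 : 0 <= M1 by (apply rsum_ge0; intros; apply pow_le, pos_INR).
  have hk0 : 0 <= INR (S p) by apply pos_INR.
  have hkk : INR (S p) <= INR (S (S p)) by (rewrite (S_INR (S p)); lra).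
  set X := L ^ p / INR n.
  have hX : 0 <= X by (unfold X, Rdiv; apply Rmult_le_pos; [exact hLp|apply Rlt_le, Rinv_0_lt_compat; lra]).
  have hig : 0 < / γ by apply Rinv_0_lt_compat.
  have eB1 : B1 = 4 * (INR (S (S p)) * INR (S (S p))) * X by (unfold B1, X, Rdiv; ring).
  have eB2 : B2 = 20 * X * / γ by (unfold B2, X; field; lra).
  have hBB : B1 + INR (S p) * B2 <= 20 * INR (S (S p)) * (INR (S (S p)) + / γ) * X.
  { rewrite eB1 eB2.
    have h1 : INR (S p) * (X * / γ) <= INR (S (S p)) * (X * / γ).
    { apply Rmult_le_compat_r; [apply Rmult_le_pos; lra|exact hkk]. }
    have h2 : 0 <= (INR (S (S p)) * INR (S (S p))) * X by (apply Rmult_le_pos; [nra|exact hX]).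
    lra. }
  have step1 : s * B1 * M1 + INR (S p) * s * B2 * (Mp * D) <= s * INR d ^ S (S p) * (B1 + INR (S p) * B2).
  { have a1 : s * B1 * M1 <= s * B1 * INR d ^ S (S p).
    { apply Rmult_le_compat_l; [apply Rmult_le_pos; lra|exact hM1]. }
    have a2 : INR (S p) * s * B2 * (Mp * D) <= INR (S p) * s * B2 * INR d ^ S (S p).
    { apply Rmult_le_compat_l; [|exact hMpD]. apply Rmult_le_pos; [apply Rmult_le_pos|]; lra. }
    lra. }
  have hdk0 : 0 <= INR d ^ S (S p) by (apply pow_le; lra).
  have step2 : s * INR d ^ S (S p) * (B1 + INR (S p) * B2) <=
               s * INR d ^ S (S p) * (20 * INR (S (S p)) * (INR (S (S p)) + / γ) * X).
  { apply Rmult_le_compat_l; [apply Rmult_le_pos; lra|exact hBB]. }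
  have hf : 0 < / INR (fact (S p)) by (apply Rinv_0_lt_compat, lt_0_INR, lt_O_fact).
  eapply Rle_trans; [apply Rmult_le_compat_l; [lra|exact hbound]|].
  rewrite hsum.
  eapply Rle_trans; [apply Rmult_le_compat_l; [lra|]; eapply Rle_trans; [exact step1|exact step2]|].
  right. unfold X. fold L. unfold Rdiv. ring.
Qed.
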